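(* Let $X$ be a non-empty finite set and let $f,g\colon X\to X$ be maps. Then $d_X(f\circ g,\mathrm{Id}_X)=d_X(g\circ f,\mathrm{Id}_X)$.
   Context: $d_X$ denotes the Hamming metric on maps $X\to X$: $d_X(h,k)=|\{x\in X : h(x)\ne k(x)\}|/|X|$. *)

(* Defs.v *)
From mathcomp Require Import all_boot all_order all_algebra.
Set Implicit Arguments. Unset Strict Implicit. Unset Printing Implicit Defensive.
Import GRing.Theory Num.Theory.
Local Open Scope ring_scope.

Definition hamming_dist (X : finType) (h k : X -> X) : rat :=
  (#|[set x : X | h x != k x]|)%:R / (#|X|)%:R.

(* Main.v *)
Require Import Defs.
From mathcomp Require Import all_boot all_order all_algebra.

Lemma fix_le (X : finType) (f g : X -> X) :
  (#|[set x | f (g x) == x]| <= #|[set x | g (f x) == x]|)%N.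
Proof.
have inj : {in [set x | f (g x) == x] &, injective g}.
  move=> x y; rewrite !inE => /eqP hx /eqP hy e.
  by rewrite -hx -hy e.
rewrite -(card_in_imset inj); apply: subset_leq_card.
apply/subsetP => y /imsetP [x]; rewrite inE => /eqP hx ->.
by rewrite inE hx.
Qed.

Lemma card_neq (X : finType) (f g : X -> X) :
  #|[set x | f (g x) != x]| = #|[set x | g (f x) != x]|.
Proof.
have E : forall h : X -> X, [set x | h x != x] = ~: [set x | h x == x].
  by move=> h; apply/setP => x; rewrite !inE.
rewrite (E (fun x => f (g x))) (E (fun x => g (f x))).
have key : #|[set x | f (g x) == x]| = #|[set x | g (f x) == x]|.
  by apply/eqP; rewrite eqn_leq !fix_le.
move: (cardsC [set x | f (g x) == x]) (cardsC [set x | g (f x) == x]).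
by rewrite key => h1; rewrite -h1 => /addnI ->.

Qed.

Theorem lemma5p2 (X : finType) (x0 : X) (f g : X -> X) :
  hamming_dist (f \o g) id = hamming_dist (g \o f) id.
Proof.
by rewrite /hamming_dist /= card_neq.
Qed.
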